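(* Let $a>0$ and $0\le r_0<a$, and consider, in polar coordinates $(r,\theta)$ about a pole $O$, the circle of radius $a$ whose centre $C$ has polar coordinates $(r_0,\theta_0)$, so that the ray from $O$ in direction $\theta$ meets the circle at distance $$r(\theta)=r_0\cos(\theta-\theta_0)+\sqrt{a^2-r_0^2\sin^2(\theta-\theta_0)} .$$ Let $\theta_1<\theta_2<\theta_3<\theta_4<\theta_1+\pi$, set $\theta_{i+4}=\theta_i+\pi$ for $i=1,2,3,4$ and $\theta_9=\theta_1+2\pi$, and for $1\le i\le 8$ let $S_i=\frac12\int_{\theta_i}^{\theta_{i+1}} r(\theta)^2\,d\theta$ (the area of the $i$-th of the eight sectors cut from the disc by the four lines through $O$ in directions $\theta_1,\dots,\theta_4$). Suppose that $$(\theta_2-\theta_1)+(\theta_4-\theta_3)=\frac{\pi}{2}$$ and $$\sin 2(\theta_4-\theta_0)+\sin 2(\theta_2-\theta_0)=\sin 2(\theta_3-\theta_0)+\sin 2(\theta_1-\theta_0).$$ Then $$S_1+S_3+S_5+S_7=\frac{\pi}{2}a^2=S_2+S_4+S_6+S_8 .$$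
   Context: Polar coordinates are taken about the pole $O$; the point with polar coordinates $(r,\theta)$ is $O+r(\cos\theta,\sin\theta)$. The sector $S_i$ is the region $\{O+\rho(\cos\theta,\sin\theta):\ \theta_i\le\theta\le\theta_{i+1},\ 0\le\rho\le r(\theta)\}$. *)

(* Defs.v *)
From Stdlib Require Import Reals.
From Coquelicot Require Import Coquelicot.
Open Scope R_scope.

Definition rpol (a r0 th0 th : R) : R :=
  r0 * cos (th - th0) + sqrt (a ^ 2 - r0 ^ 2 * sin (th - th0) ^ 2).

Definition sector (a r0 th0 u v : R) : R :=
  / 2 * RInt (fun t => (rpol a r0 th0 t) ^ 2) u v.

(* Main.v *)
Require Import Defs.
From Stdlib Require Import Reals Lra Psatz.
From Coquelicot Require Import Coquelicot.
Open Scope R_scope.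

Section S.
Variables a r0 th0 : R.
Hypothesis ha : 0 < a.
Hypothesis hr0 : 0 <= r0.
Hypothesis hra : r0 < a.

Lemma pos_arg x : 0 < a ^ 2 - r0 ^ 2 * sin x ^ 2.
Proof.
  pose proof (sin2_cos2 x) as H. unfold Rsqr in H.
  assert (0 <= cos x * cos x) by nra.
  assert (0 <= r0 ^ 2 * (1 - sin x ^ 2)) by (apply Rmult_le_pos; nra).
  nra.
Qed.

Definition f (t : R) := (rpol a r0 th0 t) ^ 2.

Lemma f_der t : ex_derive f t.
Proof.
  unfold f, rpol. auto_derive. pose proof (pos_arg (t - th0)). replace (t + - th0) with (t - th0) by ring. simpl in *. lra.
Qed.

Lemma f_int u v : ex_RInt f u v.
Proof.
  apply (ex_RInt_continuous (V:=R_CompleteNormedModule)). intros z _. apply (ex_derive_continuous (K:=R_AbsRing) (V:=R_NormedModule)), f_der.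
Qed.

Lemma key t : f t + f (t + PI) = 2 * (a ^ 2 + r0 ^ 2 * cos (2 * (t - th0))).
Proof.
  unfold f, rpol.
  replace (t + PI - th0) with ((t - th0) + PI) by ring.
  rewrite neg_cos, neg_sin.
  set (x := t - th0).
  replace ((- sin x) ^ 2) with (sin x ^ 2) by ring.
  pose proof (pos_arg x) as P.
  pose proof (sqrt_sqrt _ (Rlt_le _ _ P)) as Q.
  rewrite cos_2a. pose proof (sin2_cos2 x) as H. unfold Rsqr in H.
  set (D := sqrt (a ^ 2 - r0 ^ 2 * sin x ^ 2)) in *.
  nra.
Qed.

Lemma pair u v : sector a r0 th0 u v + sector a r0 th0 (u + PI) (v + PI)
  = a ^ 2 * (v - u) + r0 ^ 2 / 2 * (sin (2 * (v - th0)) - sin (2 * (u - th0))).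
Proof.
  unfold sector. fold f.
  assert (E : RInt f (u + PI) (v + PI) = RInt (fun t => f (t + PI)) u v).
  { replace (u + PI) with (1 * u + PI) by ring.
    replace (v + PI) with (1 * v + PI) by ring.
    rewrite <- (RInt_comp_lin f 1 PI u v).
    - apply RInt_ext. intros. unfold scal; simpl; unfold mult; simpl.
      rewrite Rmult_1_l, Rmult_1_l. reflexivity.
    - rewrite !Rmult_1_l. apply f_int. }
  rewrite E.
  assert (Hg : ex_RInt (fun t => f (t + PI)) u v).
  { apply (ex_RInt_continuous (V:=R_CompleteNormedModule)). intros z _.
    apply (continuous_comp (fun t => t + PI) f).
    - apply (ex_derive_continuous (K:=R_AbsRing) (V:=R_NormedModule)). auto_derive. auto.
    - apply (ex_derive_continuous (K:=R_AbsRing) (V:=R_NormedModule)), f_der. }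
  assert (S : RInt f u v + RInt (fun t => f (t + PI)) u v
             = RInt (fun t => 2 * (a ^ 2 + r0 ^ 2 * cos (2 * (t - th0)))) u v).
  { transitivity (RInt (fun t => plus (f t) (f (t + PI))) u v).
    - rewrite (RInt_plus (V:=R_CompleteNormedModule)); auto. apply f_int.
    - apply RInt_ext. intros; apply key. }
  rewrite <- Rmult_plus_distr_l, S.
  set (F := fun t => 2 * a ^ 2 * t + r0 ^ 2 * sin (2 * (t - th0))).
  assert (I : is_RInt (V:=R_CompleteNormedModule)
     (fun t => 2 * (a ^ 2 + r0 ^ 2 * cos (2 * (t - th0)))) u v (minus (F v) (F u))).
  { apply (is_RInt_derive (V:=R_CompleteNormedModule) F).
    + intros x _. unfold F. auto_derive; auto. replace (x + - th0) with (x - th0) by ring. ring.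
    + intros x _. apply (ex_derive_continuous (K:=R_AbsRing) (V:=R_NormedModule)). auto_derive. auto. }
  rewrite (is_RInt_unique _ _ _ _ I).
  unfold minus, plus, opp, F; simpl. field.
Qed.

End S.

Theorem mainTheorem2 (a r0 th0 th1 th2 th3 th4 : R) :
  0 < a -> 0 <= r0 -> r0 < a ->
  th1 < th2 -> th2 < th3 -> th3 < th4 -> th4 < th1 + PI ->
  (th2 - th1) + (th4 - th3) = PI / 2 ->
  sin (2 * (th4 - th0)) + sin (2 * (th2 - th0))
    = sin (2 * (th3 - th0)) + sin (2 * (th1 - th0)) ->
  sector a r0 th0 th1 th2 + sector a r0 th0 th3 th4
    + sector a r0 th0 (th1 + PI) (th2 + PI) + sector a r0 th0 (th3 + PI) (th4 + PI)
    = PI / 2 * a ^ 2 /\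
  PI / 2 * a ^ 2
    = sector a r0 th0 th2 th3 + sector a r0 th0 th4 (th1 + PI)
      + sector a r0 th0 (th2 + PI) (th3 + PI) + sector a r0 th0 (th4 + PI) (th1 + 2 * PI).
Proof.
  intros ha hr hra h12 h23 h34 h41 hsum hsin.
  pose proof (pair a r0 th0 hr hra th1 th2) as P1.
  pose proof (pair a r0 th0 hr hra th3 th4) as P2.
  pose proof (pair a r0 th0 hr hra th2 th3) as P3.
  pose proof (pair a r0 th0 hr hra th4 (th1 + PI)) as P4.
  replace (th1 + 2 * PI) with ((th1 + PI) + PI) by ring.
  replace (2 * (th1 + PI - th0)) with (2 * (th1 - th0) + 2 * PI) in P4 by ring.
  rewrite sin_plus, sin_2PI, cos_2PI in P4.
  split; nra.
Qed.
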